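(* Let $\mathcal{H}$ be an $n$-dimensional (real or complex) Hilbert space, let $F=\{f_i\}_{i=1}^N$ be a tight frame for $\mathcal{H}$, and let $\{q_i\}_{i=1}^N$ be the weight number sequence associated with a probability sequence $\{p_i\}_{i=1}^N$. Then the canonical dual $S_F^{-1}F$ is a 1-erasure probabilistic spectrally optimal dual (PSOD) of $F$ if and only if $S_F^{-1}F\in\Delta_F^{(1)}$.
   Context: A finite sequence $F=\{f_i\}_{i=1}^N$ in $\mathcal{H}$ is a frame if there are $A,B>0$ with $A\|f\|^2\le\sum_{i=1}^N|\langle f,f_i\rangle|^2\le B\|f\|^2$ for all $f$; it is tight if one can take $A=B$. The frame operator is $S_Ff=\sum_{i=1}^N\langle f,f_i\rangle f_i$ and the canonical dual is $S_F^{-1}F=\{S_F^{-1}f_i\}_{i=1}^N$. A frame $G=\{g_i\}_{i=1}^N$ is a dual of $F$ if $f=\sum_i\langle f,f_i\rangle g_i=\sum_i\langle f,g_i\rangle f_i$ for all $f$. A probability sequence is $\{p_i\}_{i=1}^N$ with $0\le p_i\le1$, $\sum p_i=1$; weight numbers $q_i=\frac{\sum_{j} p_j}{\sum_{j} p_j-p_i}\cdot\frac{N-1}{n}$. For $\Lambda\subseteq\{1,\dots,N\}$ the error operator is $E_{\Lambda,(F,G)}f=\sum_{i\in\Lambda}q_i\langle f,f_i\rangle g_i$. Set $r_P^{(1)}(F,G)=\max_{|\Lambda|=1}\rho(E_{\Lambda,(F,G)})$ ($\rho$ = spectral radius) and $\mathcal{A}_P^{(1)}(F,G)=\max_{|\Lambda|=1}\frac{\|E_{\Lambda,(F,G)}\|+\rho(E_{\Lambda,(F,G)})}{2}$.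 A dual $G$ of $F$ is a 1-erasure PSOD of $F$ if $r_P^{(1)}(F,G)=\min\{r_P^{(1)}(F,G'):G'\text{ a dual of }F\}$. $\Delta_F^{(1)}$ is the set of duals $G$ of $F$ minimizing $\mathcal{A}_P^{(1)}(F,G)$ over all duals of $F$ (1-erasure PASOD-frames). *)

(* Defs.v *)
From HB Require Import structures.
From mathcomp Require Import all_boot all_order all_algebra.
From mathcomp Require Import classical_sets reals.
From mathcomp Require Import complex.
Set Implicit Arguments. Unset Strict Implicit. Unset Printing Implicit Defensive.
Import Order.TTheory GRing.Theory Num.Theory.
Local Open Scope ring_scope.
Local Open Scope classical_set_scope.

Section Frames.
Variables (R : realType) (n N : nat).
Local Notation C := R[i].
Local Notation vec := 'cV[C]_n.
Local Notation mat := 'M[C]_n.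

(* The Hilbert space H: C^n if [isreal = false], and R^n (viewed inside C^n
   as the vectors with real coordinates) if [isreal = true]. *)
Definition inH (isreal : bool) (f : vec) : bool :=
  isreal ==> [forall k, Im (f k 0) == 0].

Definition inner (f g : vec) : C := \sum_(k < n) f k 0 * conjc (g k 0).

Definition vnorm (f : vec) : R := Num.sqrt (\sum_(k < n) Normc.normc (f k 0) ^+ 2).

(* conjugate transpose of a column vector: f^* , so that f^* *m g = <g,f> *)
Definition adjv (f : vec) : 'rV[C]_n := (map_mx conjc f)^T.

Definition is_frame (isreal : bool) (F : 'I_N -> vec) : Prop :=
  exists A B : R, 0 < A /\ 0 < B /\
    forall f, inH isreal f ->
      A * vnorm f ^+ 2 <= \sum_i Normc.normc (inner f (F i)) ^+ 2 /\
      \sum_i Normc.normc (inner f (F i)) ^+ 2 <= B * vnorm f ^+ 2.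

Definition is_tight_frame (isreal : bool) (F : 'I_N -> vec) : Prop :=
  exists A : R, 0 < A /\
    forall f, inH isreal f -> \sum_i Normc.normc (inner f (F i)) ^+ 2 = A * vnorm f ^+ 2.

Definition frame_op (F : 'I_N -> vec) : mat := \sum_i (F i *m adjv (F i)).

Definition canonical_dual (F : 'I_N -> vec) : 'I_N -> vec :=
  fun i => invmx (frame_op F) *m F i.

Definition is_dual (isreal : bool) (F G : 'I_N -> vec) : Prop :=
  (forall i, inH isreal (G i)) /\ is_frame isreal G /\
  forall f, inH isreal f ->
    f = \sum_i inner f (F i) *: G i /\ f = \sum_i inner f (G i) *: F i.

Definition prob_seq (p : 'I_N -> R) : Prop :=
  (forall i, 0 <= p i <= 1) /\ \sum_i p i = 1.

Definition weight (p : 'I_N -> R) (i : 'I_N) : R :=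
  (\sum_j p j) / (\sum_j p j - p i) * ((N.-1)%:R / n%:R).

Definition err_op (p : 'I_N -> R) (F G : 'I_N -> vec) (L : {set 'I_N}) : mat :=
  \sum_(i in L) ((weight p i)%:C%C *: (G i *m adjv (F i))).

Definition eigenvalue_of (A : mat) (l : C) : Prop :=
  exists2 v : vec, v != 0 & A *m v = l *: v.

Definition spec_rad (A : mat) : R :=
  sup [set Normc.normc l | l in eigenvalue_of A].

Definition op_norm (isreal : bool) (A : mat) : R :=
  sup [set vnorm (A *m f) | f in [set f : vec | inH isreal f /\ vnorm f <= 1]].

Definition rP1 (p : 'I_N -> R) (F G : 'I_N -> vec) : R :=
  \big[Num.max/0]_(L : {set 'I_N} | #|L| == 1%N) spec_rad (err_op p F G L).

Definition AP1 (isreal : bool) (p : 'I_N -> R) (F G : 'I_N -> vec) : R :=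
  \big[Num.max/0]_(L : {set 'I_N} | #|L| == 1%N)
     ((op_norm isreal (err_op p F G L) + spec_rad (err_op p F G L)) / 2).

Definition is_PSOD1 (isreal : bool) (p : 'I_N -> R) (F G : 'I_N -> vec) : Prop :=
  is_dual isreal F G /\
  forall G', is_dual isreal F G' -> rP1 p F G <= rP1 p F G'.

Definition in_Delta1 (isreal : bool) (p : 'I_N -> R) (F G : 'I_N -> vec) : Prop :=
  is_dual isreal F G /\
  forall G', is_dual isreal F G' -> AP1 isreal p F G <= AP1 isreal p F G'.

End Frames.

(* Main.v *)
Require Import Defs.
From HB Require Import structures.
From mathcomp Require Import all_boot all_order all_algebra.
From mathcomp Require Import classical_sets reals.
From mathcomp Require Import complex.
From mathcomp Require Import ring lra.
Set Implicit Arguments. Unset Strict Implicit. Unset Printing Implicit Defensive.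
Import Order.TTheory GRing.Theory Num.Theory.
Local Open Scope ring_scope.
Local Open Scope complex_scope.

Section Basics.
Variables (R : realType).
Local Notation C := R[i].
Import Normc.
Local Notation Re := (@complex.Re R).
Local Notation Im := (@complex.Im R).

Lemma normc_ge0 (z : C) : 0 <= normc z.
Proof. by case: z => a b /=; rewrite sqrtr_ge0. Qed.

Lemma normc_sq (z : C) : normc z ^+ 2 = Re z ^+ 2 + Im z ^+ 2.
Proof. by case: z => a b /=; rewrite sqr_sqrtr // addr_ge0 // sqr_ge0. Qed.

Lemma mulcJ (z : C) : conjc z * z = (normc z ^+ 2)%:C.
Proof.
rewrite normc_sq; case: z => a b /=.
apply/eqP; rewrite eq_complex /=; apply/andP; split; apply/eqP; ring.
Qed.

Lemma Re_real_mul (x : R) (z : C) : Re (x%:C * z) = x * Re z.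
Proof. by case: z => a b /=; ring. Qed.

Lemma Im_real_mul (x : R) (z : C) : Im (x%:C * z) = x * Im z.
Proof. by case: z => a b /=; ring. Qed.

Lemma sqr_le_imp (a b : R) : 0 <= b -> a ^+ 2 <= b ^+ 2 -> a <= b.
Proof.
move=> b0 h; have [a0|a0] := leP a 0; first exact: le_trans a0 b0.
by rewrite -ler_sqr // nnegrE ltW.
Qed.

Lemma Re_le_normc (z : C) : Re z <= normc z.
Proof.
apply: sqr_le_imp; first exact: normc_ge0.
by rewrite normc_sq lerDl sqr_ge0.
Qed.

End Basics.

Section Vec.
Variables (R : realType) (n : nat).
Local Notation C := R[i].
Local Notation vec := 'cV[C]_n.
Import Normc.
Local Notation Re := (@complex.Re R).
Local Notation Im := (@complex.Im R).
Implicit Types x y z f g : vec.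

Lemma innerDl x y z : inner (x + y) z = inner x z + inner y z.
Proof. by rewrite /inner -big_split; apply: eq_bigr => k _; rewrite mxE mulrDl. Qed.

Lemma innerDr x y z : inner x (y + z) = inner x y + inner x z.
Proof. by rewrite /inner -big_split; apply: eq_bigr => k _; rewrite mxE rmorphD mulrDr. Qed.

Lemma innerZl (c : C) x y : inner (c *: x) y = c * inner x y.
Proof. by rewrite /inner mulr_sumr; apply: eq_bigr => k _; rewrite mxE mulrA. Qed.

Lemma innerZr (c : C) x y : inner x (c *: y) = conjc c * inner x y.
Proof.
rewrite /inner mulr_sumr; apply: eq_bigr => k _; rewrite mxE rmorphM /=.
by rewrite mulrCA.
Qed.

Lemma innerC x y : inner y x = conjc (inner x y).
Proof.
rewrite /inner rmorph_sum; apply: eq_bigr => k _.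
by rewrite rmorphM /= conjcK mulrC.
Qed.

Lemma inner0l y : inner 0 y = 0.
Proof. by rewrite /inner big1 // => k _; rewrite mxE mul0r. Qed.

Lemma inner0r y : inner y 0 = 0.
Proof. by rewrite /inner big1 // => k _; rewrite mxE rmorph0 mulr0. Qed.

Lemma sumsq_ge0 x : 0 <= \sum_(k < n) normc (x k 0) ^+ 2.
Proof. by apply: sumr_ge0 => k _; rewrite sqr_ge0. Qed.

Lemma vnorm_ge0 x : 0 <= vnorm x.
Proof. exact: sqrtr_ge0. Qed.

Lemma vnorm_sq x : vnorm x ^+ 2 = \sum_(k < n) normc (x k 0) ^+ 2.
Proof. by rewrite /vnorm sqr_sqrtr // sumsq_ge0. Qed.

Lemma inner_ff x : inner x x = (vnorm x ^+ 2)%:C.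
Proof.
rewrite vnorm_sq rmorph_sum /inner; apply: eq_bigr => k _.
by rewrite mulrC mulcJ.
Qed.

Lemma vnorm_eq0 x : vnorm x = 0 -> x = 0.
Proof.
move=> h; have : \sum_(k < n) normc (x k 0) ^+ 2 = 0 by rewrite -vnorm_sq h expr0n.
move/psumr_eq0P => H; apply/matrixP => k j; rewrite (ord1 j) mxE.
apply: eq0_normc; apply/eqP; rewrite -sqrf_eq0; apply/eqP.
by apply: H => // l _; rewrite sqr_ge0.
Qed.

Lemma vnormZ (c : C) x : vnorm (c *: x) = normc c * vnorm x.
Proof.
rewrite /vnorm -[normc c](@ger0_norm _ _ (normc_ge0 c)) -sqrtr_sqr -sqrtrM ?sqr_ge0 //.
congr Num.sqrt; rewrite mulr_sumr; apply: eq_bigr => k _.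
by rewrite mxE normcM exprMn.
Qed.

Lemma vnormD2 x y :
  vnorm (x + y) ^+ 2 = vnorm x ^+ 2 + 2 * Re (inner x y) + vnorm y ^+ 2.
Proof.
apply: complexI; rewrite -inner_ff !rmorphD /= -!inner_ff innerDl !innerDr.
rewrite [inner y x]innerC rmorphM /=.
have -> : (2 : R)%:C = 2%:R by rewrite rmorphMn rmorph1.
rewrite -addcJ; ring.
Qed.

Lemma normc_real (r : R) : normc (r%:C) = `|r|.
Proof. by rewrite /= expr0n /= addr0 sqrtr_sqr. Qed.

Lemma vnorm0 : vnorm (0 : vec) = 0.
Proof. by rewrite -(scale0r 0) vnormZ normc0 mul0r. Qed.

Lemma conjR (r : R) : conjc (r%:C) = r%:C :> C.
Proof. by apply/eqP; rewrite eq_complex /= oppr0 !eqxx. Qed.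

Lemma conjNMR (c : C) (r : R) : conjc (- (c * r%:C)) = - (conjc c * r%:C).
Proof. by case: c => a b; apply/eqP; rewrite eq_complex /=; apply/andP; split; apply/eqP; ring. Qed.

Lemma CS x y : normc (inner x y) <= vnorm x * vnorm y.
Proof.
have [y0|yn0] := eqVneq (vnorm y) 0.
  by rewrite (vnorm_eq0 y0) inner0r normc0 vnorm0 mulr0.
set c := inner x y; set m := vnorm y ^+ 2.
have m0 : 0 < m by rewrite /m exprn_gt0 // lt_neqAle eq_sym yn0 vnorm_ge0.
set l := c * (m^-1)%:C.
have h := sqr_ge0 (vnorm (x + (- l) *: y)).
rewrite vnormD2 innerZr vnormZ normcN exprMn -/m in h.
have e1 : conjc (- l) * c = - (normc c ^+ 2 * m^-1)%:C.
  by rewrite /l conjNMR mulNr mulrAC mulcJ -rmorphM.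
have e2 : normc l = normc c * m^-1.
  by rewrite /l normcM normc_real ger0_norm // invr_ge0 ltW.
rewrite -/c e1 e2 raddfN /= in h.
have e4 : (normc c / m) ^+ 2 * m = normc c ^+ 2 / m.
  by field; rewrite gt_eqF.
rewrite e4 in h.
have h2 : normc c ^+ 2 / m <= vnorm x ^+ 2 by lra.
rewrite ler_pdivrMr // in h2.
apply: sqr_le_imp; first by rewrite mulr_ge0 ?vnorm_ge0.
by rewrite exprMn -/m.
Qed.
End Vec.

Section Ops.
Variables (R : realType) (n : nat).
Local Notation C := R[i].
Local Notation vec := 'cV[C]_n.
Import Normc.
Local Notation Re := (@complex.Re R).
Local Notation Im := (@complex.Im R).
Implicit Types f g u v w : vec.
Local Open Scope classical_set_scope.

Lemma adjv_mul v w : adjv v *m w = (inner w v)%:M.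
Proof.
apply/matrixP => i j; rewrite (ord1 i) (ord1 j) !mxE /inner /=.
by apply: eq_bigr => k _; rewrite !mxE mulrC.
Qed.

Lemma rank1_apply u v w : (u *m adjv v) *m w = inner w v *: u.
Proof. by rewrite -mulmxA adjv_mul mul_mx_scalar. Qed.

Lemma NumIm0 (z : C) : ('Im z == 0) = (complex.Im z == 0).
Proof. by rewrite (sameP eqP (Creal_ImP z)); case: z => a b; rewrite complex_real. Qed.

Lemma inH_E b f : inH b f = (b ==> [forall k, complex.Im (f k 0) == 0]).
Proof.
rewrite /inH; congr (_ ==> _); apply: eq_forallb => k; exact: NumIm0.
Qed.

Lemma inH0 b : inH b (0 : vec).
Proof. by rewrite inH_E; apply/implyP => _; apply/forallP => k; rewrite mxE. Qed.

Lemma inHZ b (r : R) f : inH b f -> inH b (r%:C *: f).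
Proof.
rewrite !inH_E; move=> /implyP h; apply/implyP => hb; move/forallP: (h hb) => H.
apply/forallP => k; rewrite mxE Im_real_mul (eqP (H k)) mulr0 //.
Qed.

Lemma inHD b f g : inH b f -> inH b g -> inH b (f + g).
Proof.
rewrite !inH_E; move=> /implyP h1 /implyP h2; apply/implyP => hb.
move/forallP: (h1 hb) => H1; move/forallP: (h2 hb) => H2.
by apply/forallP => k; rewrite mxE raddfD /= (eqP (H1 k)) (eqP (H2 k)) addr0.
Qed.

Lemma sup_two (S : set R) (b : R) : 0 <= b ->
  (forall x, S x -> x = 0 \/ x = b) -> (b != 0 -> S b) -> sup S = b.
Proof.
move=> b0 hS hb.
have ub : ubound S b by move=> x /hS [->|->].
have hub : has_ubound S by exists b.
have [bz|bnz] := eqVneq b 0; last first.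
  apply/eqP; rewrite eq_le; apply/andP; split.
    by apply: ge_sup => //; exists b; exact: hb.
  by apply: ub_le_sup => //; exact: hb.
subst b.
have [[x Sx]|nS] := boolp.pselect (exists x, S x).
  apply/eqP; rewrite eq_le; apply/andP; split.
    by apply: ge_sup => //; exists x.
  by have [x0|x0] := hS x Sx; subst x; apply: ub_le_sup.
have -> : S = set0.
  by apply/seteqP; split => x //= Sx; apply: nS; exists x.
exact: sup0.
Qed.

Lemma spec_rad_rank1 u v : spec_rad (u *m adjv v) = normc (inner u v).
Proof.
apply: sup_two; first exact: normc_ge0.
  move=> x [l [w wn0 hw] <-].
  rewrite rank1_apply in hw.
  have [l0|ln0] := eqVneq l 0; first by left; rewrite l0 normc0.
  right; congr normc.
  have e : inner (inner w v *: u) v = inner (l *: w) v by rewrite hw.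
  rewrite !innerZl in e.
  have [iw0|iwn0] := eqVneq (inner w v) 0.
    move: hw; rewrite iw0 scale0r => /esym /eqP; rewrite scaler_eq0 (negPf ln0) /=.
    by move/eqP => w0; rewrite w0 eqxx in wn0.
  by apply: (mulfI iwn0); rewrite e mulrC.
move=> hn; exists (inner u v) => //; exists u.
  by apply: contra hn => /eqP ->; rewrite inner0l normc0.
by rewrite rank1_apply.
Qed.

Lemma op_norm_rank1_le b u v : op_norm b (u *m adjv v) <= vnorm u * vnorm v.
Proof.
apply: ge_sup.
  by exists 0; exists 0; [split; [exact: inH0 | rewrite vnorm0]|rewrite mulmx0 vnorm0].
move=> x [f [_ hf] <-]; rewrite rank1_apply vnormZ mulrC.
apply: ler_wpM2l; first exact: vnorm_ge0.
apply: le_trans (CS f v) _.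
rewrite -[leRHS]mul1r; apply: ler_wpM2r => //; exact: vnorm_ge0.
Qed.

Lemma op_norm_rank1_ge b u v : inH b u ->
  normc (inner u v) <= op_norm b (u *m adjv v).
Proof.
move=> hu.
have hub : has_ubound [set vnorm (u *m adjv v *m f) | f in
   [set f : vec | inH b f /\ vnorm f <= 1]].
  exists (vnorm u * vnorm v) => x [f [_ hf] <-]; rewrite rank1_apply vnormZ mulrC.
  apply: ler_wpM2l; first exact: vnorm_ge0.
  apply: le_trans (CS f v) _.
  rewrite -[leRHS]mul1r; apply: ler_wpM2r => //; exact: vnorm_ge0.
have [u0|un0] := eqVneq (vnorm u) 0.
  move: hub; rewrite (vnorm_eq0 u0) inner0l normc0 => hub.
  apply: ub_le_sup => //; exists 0; first by split; [exact: inH0|rewrite vnorm0].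
  by rewrite mulmx0 vnorm0.
have up : 0 < vnorm u by rewrite lt_neqAle eq_sym un0 vnorm_ge0.
apply: ub_le_sup => //; exists ((vnorm u)^-1%:C *: u).
  split; first exact: inHZ.
  by rewrite vnormZ normc_real ger0_norm ?invr_ge0 ?vnorm_ge0 // mulVf.
rewrite rank1_apply vnormZ innerZl normcM normc_real ger0_norm ?invr_ge0 ?vnorm_ge0 //.
by rewrite mulrAC mulVf // mul1r.
Qed.

End Ops.

Section Tight.
Variables (R : realType) (n N : nat).
Local Notation C := R[i].
Local Notation vec := 'cV[C]_n.
Local Notation mat := 'M[C]_n.
Import Normc.
Implicit Types f g u v w : vec.

Lemma mxaddE m k (A1 A2 : 'M[C]_(m, k)) i j : (A1 + A2) i j = A1 i j + A2 i j.
Proof. by rewrite mxE. Qed.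
Lemma mxscaleE m k (c : C) (A1 : 'M[C]_(m, k)) i j : (c *: A1) i j = c * A1 i j.
Proof. by rewrite mxE. Qed.

Lemma mxoppE m k (A1 : 'M[C]_(m, k)) i j : (- A1) i j = - A1 i j.
Proof. by rewrite mxE. Qed.

Definition B (D : mat) u v : C := (adjv u *m D *m v) 0 0.

Lemma adjvD u v : adjv (u + v) = adjv u + adjv v.
Proof. by rewrite /adjv raddfD /= raddfD. Qed.

Lemma adjvZ (c : C) u : adjv (c *: u) = conjc c *: adjv u.
Proof. by apply/matrixP => i j; rewrite !mxE rmorphM. Qed.

Lemma B_delta (D : mat) j k : B D (delta_mx j 0) (delta_mx k 0) = D j k.
Proof.
rewrite /B /adjv map_delta_mx trmx_delta -rowE -colE !mxE //.
Qed.

Lemma B_expand (D : mat) x y (c : C) :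
  B D (x + c *: y) (x + c *: y) =
  B D x x + conjc c * c * B D y y + c * B D x y + conjc c * B D y x.
Proof.
rewrite /B adjvD adjvZ mulmxDl !mulmxDr -!scalemxAl ?mulmxDl -!scalemxAl -?scalemxAr.
rewrite !(mxaddE, mxscaleE); ring.
Qed.

Lemma B_sub (D1 D2 : mat) u v : B (D1 - D2) u v = B D1 u v - B D2 u v.
Proof. by rewrite /B mulmxBr mulmxBl mxaddE mxoppE. Qed.

Lemma B_scalar (a : C) f : B a%:M f f = a * inner f f.
Proof. by rewrite /B mul_mx_scalar -scalemxAl adjv_mul mxscaleE mxE mulr1n. Qed.

Lemma B_frame (F : 'I_N -> vec) f :
  B (frame_op F) f f = (\sum_i normc (inner f (F i)) ^+ 2)%:C.
Proof.
rewrite /B /frame_op mulmx_sumr mulmx_suml summxE rmorph_sum; apply: eq_bigr => i _.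
rewrite !mulmxA adjv_mul -mulmxA adjv_mul -scalar_mxM mxE mulr1n /=.
by rewrite innerC mulcJ.
Qed.

Lemma frame_op_entry (F : 'I_N -> vec) j k :
  frame_op F j k = \sum_i F i j 0 * conjc (F i k 0).
Proof.
rewrite /frame_op summxE; apply: eq_bigr => i _.
by rewrite mxE big_ord1 /adjv !mxE.
Qed.

Lemma conj_Im0 (z : C) : complex.Im z = 0 -> conjc z = z.
Proof. by case: z => a b /= ->; rewrite oppr0. Qed.

Lemma inH_delta b j : inH b (delta_mx j 0 : vec).
Proof.
rewrite inH_E; apply/implyP => _; apply/forallP => k; rewrite mxE.
by case: (_ && _).
Qed.

Lemma frame_op_tight b (F : 'I_N -> vec) (A : R) :
  (forall i, inH b (F i)) ->
  (forall f, inH b f -> \sum_i normc (inner f (F i)) ^+ 2 = A * vnorm f ^+ 2) ->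
  frame_op F = (A%:C)%:M.
Proof.
move=> HF HT.
pose D := frame_op F - (A%:C)%:M.
have QD f : inH b f -> B D f f = 0.
  move=> hf; rewrite B_sub B_frame B_scalar HT // inner_ff rmorphM /=.
  by rewrite subrr.
have Djj j : D j j = 0 by rewrite -B_delta QD // inH_delta.
have sym j k : D j k + D k j = 0.
  have h := QD (delta_mx j 0 + 1%:C *: delta_mx k 0).
  rewrite B_expand !B_delta !Djj conjR in h.
  have one : (1%:C : C) = 1 by [].
  rewrite one !mul1r ?mulr0 !add0r in h.
  apply: h.
  by apply: inHD; [exact: inH_delta | apply: inHZ; exact: inH_delta].
have Djk j k : D j k = 0.
  case: b HF HT QD => HF HT QD.
    have e : D j k = D k j.
      rewrite /D !mxaddE !mxE !frame_op_entry eq_sym; congr (_ - _).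
      apply: eq_bigr => i _.
      have hi := HF i; rewrite inH_E /= in hi; move/forallP: hi => hi.
      by rewrite !conj_Im0 ?(eqP (hi _)) // mulrC.
    have := sym j k; rewrite -e => /eqP; rewrite -mulr2n mulrn_eq0 /=.
    by move/eqP.
  pose ii : C := Complex 0 1.
  have h := QD (delta_mx j 0 + ii *: delta_mx k 0).
  rewrite B_expand !B_delta !Djj in h.
  have ci : conjc ii = - ii by apply/eqP; rewrite eq_complex /= oppr0 !eqxx.
  rewrite ci in h.
  have h2 : ii * (D j k - D k j) = 0 by rewrite -h ?inH_E //; ring.
  have iin0 : ii != 0 by rewrite eq_complex /= oner_eq0 andbF.
  move/eqP: h2; rewrite mulf_eq0 (negbTE iin0) /= subr_eq0 => /eqP e.
  have := sym j k; rewrite -e => /eqP; rewrite -mulr2n mulrn_eq0 /=.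
  by move/eqP.
apply/eqP; rewrite -subr_eq0; apply/eqP/matrixP => j k.
by rewrite Djk mxE.
Qed.

End Tight.

Section Real.
Variable R : realType.

Lemma key_ineq (r s a c t M Mi X : R) :
  0 <= a -> a <= r -> 0 <= c -> c <= s -> s < r -> 0 <= Mi -> Mi <= M ->
  0 < t -> t <= 1 -> t * ((r - s) ^+ 2 + M) <= 2 * r * (r - s) ->
  X <= (1 - t) ^+ 2 * a ^+ 2 + 2 * (1 - t) * t * a * c + t ^+ 2 * Mi ->
  X <= r ^+ 2.
Proof.
move=> a0 ar c0 cs sr Mi0 MiM t0 t1 ht hX.
set y := (1 - t) * a + t * c.
have y0 : 0 <= y.
  have h1 : 0 <= (1 - t) * a by apply: mulr_ge0 => //; rewrite subr_ge0.
  have h2 : 0 <= t * c by exact: mulr_ge0 (ltW t0) c0.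
  rewrite /y; lra.
have yr : y <= r - t * (r - s).
  have : (1 - t) * a <= (1 - t) * r by rewrite ler_wpM2l // subr_ge0.
  have : t * c <= t * s by rewrite ler_wpM2l // ltW.
  rewrite /y; lra.
have y2 : y ^+ 2 <= (r - t * (r - s)) ^+ 2.
  by rewrite ler_sqr // nnegrE (le_trans y0 yr).
have e : (1 - t) ^+ 2 * a ^+ 2 + 2 * (1 - t) * t * a * c = y ^+ 2 - t ^+ 2 * c ^+ 2.
  by rewrite /y; ring.
have tc : 0 <= t ^+ 2 * c ^+ 2 by rewrite mulr_ge0 // sqr_ge0.
have tM : t ^+ 2 * Mi <= t ^+ 2 * M by rewrite ler_wpM2l // sqr_ge0.
have fin : (r - t * (r - s)) ^+ 2 + t ^+ 2 * M <= r ^+ 2.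
  have : t * (t * ((r - s) ^+ 2 + M)) <= t * (2 * r * (r - s)) by rewrite ler_wpM2l // ltW.
  move=> h; have -> : (r - t * (r - s)) ^+ 2 + t ^+ 2 * M = r ^+ 2 - t * (2 * r * (r - s)) + t * (t * ((r - s) ^+ 2 + M)) by ring.
  lra.
rewrite e in hX; lra.
Qed.

End Real.

Section Frame.
Variables (R : realType) (n N : nat).
Local Notation C := R[i].
Local Notation vec := 'cV[C]_n.
Import Normc.
Implicit Types f g u v w : vec.

Lemma inner_sumr f (v : 'I_N -> vec) : inner f (\sum_i v i) = \sum_i inner f (v i).
Proof.
rewrite /inner exchange_big /=; apply: eq_bigr => k _.
by rewrite summxE rmorph_sum mulr_sumr.
Qed.

Lemma inner_sumr_scale f (c : 'I_N -> C) (v : 'I_N -> vec) :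
  inner f (\sum_i c i *: v i) = \sum_i conjc (c i) * inner f (v i).
Proof. by rewrite inner_sumr; apply: eq_bigr => i _; rewrite innerZr. Qed.

Lemma vnorm_col (c : 'I_N -> C) : vnorm (\col_i c i) ^+ 2 = \sum_i normc (c i) ^+ 2.
Proof. by rewrite vnorm_sq; apply: eq_bigr => i _; rewrite mxE. Qed.

Lemma frame_of_recon b (F G : 'I_N -> vec) (Bd : R) : 0 < Bd ->
  (forall f, inH b f -> \sum_i normc (inner f (F i)) ^+ 2 <= Bd * vnorm f ^+ 2) ->
  (forall f, inH b f -> f = \sum_i inner f (G i) *: F i) -> is_frame b G.
Proof.
move=> B0 HB HR.
exists Bd^-1, (\sum_i vnorm (G i) ^+ 2 + 1); split; first by rewrite invr_gt0.
split.
  by rewrite ltr_pwDr // sumr_ge0 // => i _; rewrite sqr_ge0.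
move=> f hf; split; last first.
  apply: (@le_trans _ _ ((\sum_i vnorm (G i) ^+ 2) * vnorm f ^+ 2)).
    rewrite mulr_suml; apply: ler_sum => i _; rewrite -exprMn mulrC.
    rewrite ler_pXn2r // ?nnegrE ?normc_ge0 ?mulr_ge0 ?vnorm_ge0 //; exact: CS.
  by rewrite ler_wpM2r ?sqr_ge0 // lerDl.
set X := \sum_i normc (inner f (G i)) ^+ 2.
have X0 : 0 <= X by rewrite sumr_ge0 // => i _; rewrite sqr_ge0.
pose a : 'cV[C]_N := \col_i inner f (G i).
pose bv : 'cV[C]_N := \col_i inner f (F i).
have e : inner f f = inner bv a.
  rewrite {2}(HR f hf) inner_sumr_scale /inner; apply: eq_bigr => i _.
  by rewrite !mxE mulrC.
have h1 : vnorm f ^+ 2 <= vnorm bv * vnorm a.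
  by have := CS bv a; rewrite -e inner_ff normc_real ger0_norm // sqr_ge0.
have ha : vnorm a ^+ 2 = X by rewrite vnorm_col.
have hb : vnorm bv ^+ 2 <= Bd * vnorm f ^+ 2 by rewrite vnorm_col; exact: HB.
have h2 : vnorm f ^+ 2 * vnorm f ^+ 2 <= Bd * vnorm f ^+ 2 * X.
  rewrite -ha; apply: le_trans (_ : (vnorm bv * vnorm a) ^+ 2 <= _).
    by rewrite -expr2 ler_pXn2r ?nnegrE ?sqr_ge0 ?mulr_ge0 ?vnorm_ge0 // h1.
  by rewrite exprMn ler_wpM2r ?sqr_ge0.
have [f0|fn0] := eqVneq (vnorm f) 0; first by rewrite f0 expr0n mulr0.
have fp : 0 < vnorm f ^+ 2 by rewrite exprn_gt0 // lt_neqAle eq_sym fn0 vnorm_ge0.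
rewrite ler_pdivrMl // mulrC.
rewrite -(@ler_pM2l _ (vnorm f ^+ 2)) //.
by have -> : vnorm f ^+ 2 * (X * Bd) = Bd * vnorm f ^+ 2 * X by ring.
Qed.

End Frame.

Section Main.
Variables (R : realType) (n N : nat).
Local Notation C := R[i].
Local Notation vec := 'cV[C]_n.
Import Normc.
Local Notation BM x := (\big[Num.max/0]_(L : {set 'I_N} | #|L| == 1%N) x L).

Lemma bm_ge0 (x : {set 'I_N} -> R) : 0 <= BM x.
Proof. by elim/big_rec: _ => // i y _ hy; rewrite le_max hy orbT. Qed.

Lemma bm_le (x : {set 'I_N} -> R) c : 0 <= c ->
  (forall L : {set 'I_N}, #|L| == 1%N -> x L <= c) -> BM x <= c.
Proof.
move=> c0 h; elim/big_rec: _ => // L y hL hy; rewrite ge_max hy andbT; exact: h.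
Qed.

Lemma bm_lt (x : {set 'I_N} -> R) c : 0 < c ->
  (forall L : {set 'I_N}, #|L| == 1%N -> x L < c) -> BM x < c.
Proof.
move=> c0 h; elim/big_rec: _ => // L y hL hy; rewrite gt_max hy andbT; exact: h.
Qed.

Lemma bm_ge (x : {set 'I_N} -> R) (L : {set 'I_N}) : #|L| == 1%N -> x L <= BM x.
Proof. by move=> hL; rewrite (bigD1 L) //= le_max lexx. Qed.

Lemma err1 (p : 'I_N -> R) (F G : 'I_N -> vec) i :
  err_op p F G [set i] = ((weight n p i)%:C *: G i) *m adjv (F i).
Proof. by rewrite /err_op big_set1 scalemxAl. Qed.

Lemma weight_ge0 (p : 'I_N -> R) i : prob_seq p -> 0 <= weight n p i.
Proof.
move=> [hp hs]; rewrite /weight hs; case/andP: (hp i) => _ h1.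
apply: mulr_ge0; first by rewrite mul1r invr_ge0 subr_ge0.
by rewrite divr_ge0 ?ler0n.
Qed.

Lemma rho_eq (p : 'I_N -> R) (F G : 'I_N -> vec) i : prob_seq p ->
  spec_rad (err_op p F G [set i]) = weight n p i * normc (inner (G i) (F i)).
Proof.
move=> hp; rewrite err1 spec_rad_rank1 innerZl normcM normc_real ger0_norm //.
exact: weight_ge0.
Qed.

Lemma rP_le_AP b (p : 'I_N -> R) (F G : 'I_N -> vec) : prob_seq p ->
  (forall i, inH b (G i)) -> rP1 p F G <= AP1 b p F G.
Proof.
move=> hp hG; apply: bm_le; first exact: bm_ge0.
move=> L hL; case/cards1P: (hL) => i eL; subst L.
have h : spec_rad (err_op p F G [set i]) <= op_norm b (err_op p F G [set i]).
  by rewrite err1 spec_rad_rank1; apply: op_norm_rank1_ge; apply: inHZ.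
apply: le_trans (bm_ge (fun L => (op_norm b (err_op p F G L) + spec_rad (err_op p F G L)) / 2) hL).
rewrite /=; lra.
Qed.

End Main.

Section Main2.
Variables (R : realType) (n N : nat).
Local Notation C := R[i].
Local Notation vec := 'cV[C]_n.
Import Normc.

Lemma normc_conj (z : C) : normc (conjc z) = normc z.
Proof. by case: z => a b /=; rewrite sqrrN. Qed.

Lemma Re_conj (z : C) : complex.Re (conjc z) = complex.Re z.
Proof. by case: z. Qed.

Lemma AP_le_rP_can b (p : 'I_N -> R) (F : 'I_N -> vec) (A : R) : prob_seq p -> 0 < A ->
  AP1 b p F (fun i => (A^-1)%:C *: F i) <= rP1 p F (fun i => (A^-1)%:C *: F i).
Proof.
move=> hp A0; apply: bm_le; first exact: bm_ge0.
move=> L hL; case/cards1P: (hL) => i eL; subst L.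
set G := (fun i => (A^-1)%:C *: F i).
have h : op_norm b (err_op p F G [set i]) <= spec_rad (err_op p F G [set i]).
  rewrite err1 spec_rad_rank1; apply: le_trans (op_norm_rank1_le _ _ _) _.
  rewrite /G !innerZl !vnormZ !normcM !normc_real inner_ff normc_real.
  rewrite !ger0_norm ?invr_ge0 ?(ltW A0) ?sqr_ge0 ?weight_ge0 //.
  by rewrite -!mulrA expr2.
apply: le_trans (bm_ge (fun L => spec_rad (err_op p F G L)) hL).
rewrite /=; lra.
Qed.

End Main2.

Section Comb.
Variables (R : realType) (n N : nat).
Local Notation C := R[i].
Local Notation vec := 'cV[C]_n.
Import Normc.

Lemma dual_comb b (F U G : 'I_N -> vec) (Bd t : R) : 0 < Bd ->
  (forall f, inH b f -> \sum_i normc (inner f (F i)) ^+ 2 <= Bd * vnorm f ^+ 2) ->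
  is_dual b F U -> is_dual b F G ->
  is_dual b F (fun i => (1 - t)%:C *: U i + t%:C *: G i).
Proof.
move=> B0 HB [HUi [_ HUr]] [HGi [_ HGr]].
have r1 f : inH b f -> f = \sum_i inner f (F i) *: ((1 - t)%:C *: U i + t%:C *: G i).
  move=> hf.
  have -> : \sum_i inner f (F i) *: ((1 - t)%:C *: U i + t%:C *: G i) =
     (1 - t)%:C *: (\sum_i inner f (F i) *: U i) + t%:C *: (\sum_i inner f (F i) *: G i).
    rewrite !scaler_sumr -big_split; apply: eq_bigr => i _.
    by rewrite scalerDr !scalerA ![_ * inner _ _]mulrC.
  rewrite -(HUr f hf).1 -(HGr f hf).1 -scalerDl -rmorphD subrK.
  by rewrite rmorph1 scale1r.
have r2 f : inH b f -> f = \sum_i inner f ((1 - t)%:C *: U i + t%:C *: G i) *: F i.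
  move=> hf.
  have -> : \sum_i inner f ((1 - t)%:C *: U i + t%:C *: G i) *: F i =
     (1 - t)%:C *: (\sum_i inner f (U i) *: F i) + t%:C *: (\sum_i inner f (G i) *: F i).
    rewrite !scaler_sumr -big_split; apply: eq_bigr => i _.
    by rewrite innerDr !innerZr !conjR scalerDl !scalerA.
  rewrite -(HUr f hf).2 -(HGr f hf).2 -scalerDl -rmorphD subrK.
  by rewrite rmorph1 scale1r.
split.
  by move=> i; apply: inHD; apply: inHZ.
split; last by move=> f hf; split; [exact: r1 | exact: r2].
exact: (frame_of_recon B0 HB r2).
Qed.

End Comb.

Section Comb2.
Variables (R : realType) (n N : nat).
Local Notation C := R[i].
Local Notation vec := 'cV[C]_n.
Import Normc.

Lemma AP_comb_lt b (p : 'I_N -> R) (F G : 'I_N -> vec) (A : R) :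
  prob_seq p -> 0 < A -> (forall i, inH b (G i)) ->
  rP1 p F G < rP1 p F (fun i => (A^-1)%:C *: F i) ->
  exists t : R, AP1 b p F (fun i => (1 - t)%:C *: ((A^-1)%:C *: F i) + t%:C *: G i)
     < rP1 p F (fun i => (A^-1)%:C *: F i).
Proof.
move=> hp A0 HGi hlt.
set U := (fun i => (A^-1)%:C *: F i) in hlt *.
set r := rP1 p F U in hlt *; set s := rP1 p F G in hlt.
have s0 : 0 <= s by apply: bm_ge0.
have r0 : 0 < r by apply: le_lt_trans hlt.
have Ai0 : 0 <= A^-1 by rewrite invr_ge0 ltW.
have q0 i : 0 <= weight n p i by apply: weight_ge0.
have iUF i : inner (U i) (F i) = (A^-1 * vnorm (F i) ^+ 2)%:C.
  by rewrite /U /= innerZl inner_ff -rmorphM.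
have ha i : weight n p i * (A^-1 * vnorm (F i) ^+ 2) <= r.
  have := bm_ge (fun L => spec_rad (err_op p F U L)) (introT eqP (cards1 i)).
  rewrite rho_eq; last exact: hp.
  rewrite iUF normc_real ger0_norm; first exact.
  by apply: mulr_ge0; [exact: Ai0 | exact: sqr_ge0].
have hc i : weight n p i * normc (inner (G i) (F i)) <= s.
  have := bm_ge (fun L => spec_rad (err_op p F G L)) (introT eqP (cards1 i)).
  rewrite rho_eq; last exact: hp.
  exact.
pose M := \sum_j (weight n p j * vnorm (F j) * vnorm (G j)) ^+ 2.
have hM i : (weight n p i * vnorm (F i) * vnorm (G i)) ^+ 2 <= M.
  rewrite /M (bigD1 i) //= lerDl; apply: sumr_ge0 => j _; exact: sqr_ge0.
have M0 : 0 <= M by apply: sumr_ge0 => j _; exact: sqr_ge0.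
pose d := r - s.
have d0 : 0 < d by rewrite /d subr_gt0; exact: hlt.
pose den := d ^+ 2 + M + r * d.
have den0 : 0 < den.
  rewrite /den; apply: ltr_pwDr; first exact: mulr_gt0.
  by apply: addr_ge0; [exact: sqr_ge0 | exact: M0].
pose t := r * d / den.
have t0 : 0 < t by apply: divr_gt0 => //; exact: mulr_gt0.
have tden : t * den = r * d by rewrite /t mulrVK // unitfE gt_eqF.
have t1 : t <= 1.
  rewrite -(ler_pM2r den0) mul1r tden /den.
  have : 0 <= d ^+ 2 + M by apply: addr_ge0; [exact: sqr_ge0 | exact: M0].
  lra.
have tk : t * ((r - s) ^+ 2 + M) <= 2 * r * (r - s).
  rewrite -/d; have : t * (d ^+ 2 + M) + t * (r * d) = r * d by rewrite -mulrDr.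
  have : 0 <= t * (r * d) by apply: mulr_ge0; [exact: ltW | apply: mulr_ge0; exact: ltW].
  have : 0 <= r * d by apply: mulr_ge0; exact: ltW.
  lra.
exists t.
apply: bm_lt; first exact: r0.
move=> L hL; case/cards1P: hL => i ->.
pose Gt := fun i0 => (1 - t)%:C *: ((A^-1)%:C *: F i0) + t%:C *: G i0.
change ((op_norm b (err_op p F Gt [set i]) + spec_rad (err_op p F Gt [set i])) / 2 < r).
pose q := weight n p i.
pose a := q * (A^-1 * vnorm (F i) ^+ 2).
pose c := q * normc (inner (G i) (F i)).
have tl1 : 0 <= 1 - t by rewrite subr_ge0.
have a0 : 0 <= a by apply: mulr_ge0; [exact: q0 | apply: mulr_ge0; [exact: Ai0|exact: sqr_ge0]].
have c0 : 0 <= c by apply: mulr_ge0; [exact: q0 | exact: normc_ge0].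
have hrho : spec_rad (err_op p F Gt [set i]) <= (1 - t) * a + t * c.
  rewrite rho_eq; last exact: hp.
  have eI : inner (Gt i) (F i) = (1 - t)%:C * (A^-1 * vnorm (F i) ^+ 2)%:C + t%:C * inner (G i) (F i).
    by rewrite /Gt innerDl !innerZl inner_ff -rmorphM.
  rewrite eI -/q.
  apply: le_trans (_ : q * ((1 - t) * (A^-1 * vnorm (F i) ^+ 2) + t * normc (inner (G i) (F i))) <= _).
    apply: ler_wpM2l; first exact: q0.
    apply: le_trans (le_normcD _ _) _.
    rewrite !normcM !normc_real !ger0_norm; first exact: lexx.
    - exact: ltW.
    - by apply: mulr_ge0; [exact: Ai0|exact: sqr_ge0].
    - exact: tl1.
  by rewrite /a /c; lra.
have hnrm : op_norm b (err_op p F Gt [set i]) <= q * vnorm (Gt i) * vnorm (F i).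
  rewrite err1; apply: le_trans (op_norm_rank1_le _ _ _) _.
  rewrite vnormZ normc_real ger0_norm; first exact: lexx.
  exact: q0.
pose vF := vnorm (F i); pose vG := vnorm (G i); pose nG := normc (inner (G i) (F i)).
have vF0 : 0 <= vF by exact: vnorm_ge0.
have vG0 : 0 <= vG by exact: vnorm_ge0.
have hv : vnorm (Gt i) ^+ 2 <= ((1 - t) * (A^-1 * vF)) ^+ 2 + 2 * ((1 - t) * (t * (A^-1 * nG))) + (t * vG) ^+ 2.
  rewrite /Gt vnormD2 !vnormZ !normc_real !(ger0_norm tl1) !(ger0_norm Ai0) (ger0_norm (ltW t0)).
  rewrite !innerZl innerZr conjR !Re_real_mul -/vF -/vG.
  have hRe : complex.Re (inner (F i) (G i)) <= nG.
    by rewrite /nG [inner (G i) (F i)]innerC normc_conj; exact: Re_le_normc.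
  have k0 : 0 <= (1 - t) * (A^-1 * t) by apply: mulr_ge0 => //; apply: mulr_ge0 => //; exact: ltW.
  have := ler_wpM2l k0 hRe.
  lra.
have hX : (q * vnorm (Gt i) * vF) ^+ 2 <= (1 - t) ^+ 2 * a ^+ 2 + 2 * (1 - t) * t * a * c + t ^+ 2 * (q * vF * vG) ^+ 2.
  have k0 : 0 <= (q * vF) ^+ 2 by exact: sqr_ge0.
  have := ler_wpM2l k0 hv.
  have -> : (q * vnorm (Gt i) * vF) ^+ 2 = (q * vF) ^+ 2 * vnorm (Gt i) ^+ 2 by ring.
  have -> : (1 - t) ^+ 2 * a ^+ 2 + 2 * (1 - t) * t * a * c + t ^+ 2 * (q * vF * vG) ^+ 2 =
     (q * vF) ^+ 2 * (((1 - t) * (A^-1 * vF)) ^+ 2 + 2 * ((1 - t) * (t * (A^-1 * nG))) + (t * vG) ^+ 2).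
    by rewrite /a /c /nG -/vF; ring.
  by [].
have hN : q * vnorm (Gt i) * vF <= r.
  apply: sqr_le_imp; first exact: ltW.
  exact: (key_ineq a0 (ha i) c0 (hc i) hlt (sqr_ge0 _) (hM i) t0 t1 tk hX).
have h1 : (1 - t) * a <= (1 - t) * r by apply: ler_wpM2l; [exact: tl1 | exact: ha].
have h2 : t * c <= t * s by apply: ler_wpM2l; [exact: ltW | exact: hc].
have h3 : 0 < t * d by exact: mulr_gt0.
rewrite /d in h3.
rewrite -/vF in hnrm.
lra.
Qed.


End Comb2.

Import Normc.


Import Normc.

Theorem theorem3p5 (R : realType) (isreal : bool) (n N : nat)
    (F : 'I_N -> 'cV[R[i]]_n) (p : 'I_N -> R) :
  (forall i, inH isreal (F i)) ->
  is_tight_frame isreal F ->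
  prob_seq p ->
  (is_PSOD1 isreal p F (canonical_dual F) <-> in_Delta1 isreal p F (canonical_dual F)).
Proof.
move=> HF [A [A0 HT]] hp.
have ecan : canonical_dual F = (fun i => (A^-1)%:C *: F i).
  apply: boolp.funext => i; rewrite /canonical_dual (frame_op_tight HF HT).
  by rewrite invmx_scalar mul_scalar_mx fmorphV.
rewrite ecan.
pose U := (fun i => (A^-1)%:C *: F i).
have eU : (fun i => (A^-1)%:C *: F i) = U by [].
rewrite eU.
have HU : forall i, inH isreal (U i) by move=> i; apply: inHZ.
have e1 : AP1 isreal p F U <= rP1 p F U := @AP_le_rP_can R n N isreal p F A hp A0.
have e2 : rP1 p F U <= AP1 isreal p F U := @rP_le_AP R n N isreal p F U hp HU.
split.
  move=> [Hd Hmin]; split; first exact: Hd.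
  move=> G' HG'.
  apply: (le_trans e1); apply: (le_trans (Hmin _ HG')).
  apply: rP_le_AP; first exact: hp.
  by case: HG'.
move=> [Hd Hmin]; split; first exact: Hd.
move=> G HG.
rewrite leNgt; apply/negP => hlt.
have HGi : forall i, inH isreal (G i) by case: HG.
have [t ht] := @AP_comb_lt R n N isreal p F G A hp A0 HGi hlt.
have HB : forall f, inH isreal f -> \sum_i normc (inner f (F i)) ^+ 2 <= A * vnorm f ^+ 2.
  by move=> f hf; rewrite HT.
have HGt := @dual_comb R n N isreal F U G A t A0 HB Hd HG.
have h := Hmin _ HGt.
have := le_lt_trans h ht.
have := le_lt_trans e2 (le_lt_trans h ht).
by rewrite ltxx.
Qed.
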